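(* Let $q\ge2$ be a prime power and let $\mathcal{S}$ be a regular spread of lines in $\mathrm{PG}(3,q)$. Let $l_1,l_2,l_3$ be three lines of $\mathcal{S}$, let $\mathcal{R}$ be the unique regulus containing them, and let $l_4\in\mathcal{S}\setminus\mathcal{R}$. Then for every ordering $\{i_1,i_2,i_3,i_4\}=\{1,2,3,4\}$, the line $l_{i_4}$ can be obtained from $l_{i_1},l_{i_2},l_{i_3}$ by $(3,1)$-repair, i.e. there exist points $P_j\in l_{i_j}$ ($j=1,2,3$) with $l_{i_4}\subseteq\langle P_1,P_2,P_3\rangle$.
   Context: A spread of $\mathrm{PG}(3,q)$ is a set of $q^2+1$ pairwise skew lines partitioning the points. For three pairwise skew lines, the regulus they determine is the set of $q+1$ lines meeting every transversal line of the three (a transversal being a line meeting all three); a spread is regular if for any three of its lines, the regulus they determine is contained in the spread. *)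

(* Defs.v *)
(* Projective space PG(3,q) = PG(3,F) for a finite field F with
   #|F| = q. Subspaces of F^4 are represented by square matrices 'M[F]_4 via
   their row spaces (mxalgebra); projective lines are canonical representatives
   (<<L>>%MS = L) of 2-dimensional row spaces, so that equality of lines is
   Leibniz equality. Projective points are represented by nonzero row vectors. *)
From HB Require Import structures.
From mathcomp Require Import all_boot all_order all_algebra all_fingroup.
Set Implicit Arguments. Unset Strict Implicit. Unset Printing Implicit Defensive.
Import GRing.Theory.
Local Open Scope ring_scope.

Section PG3.
Variable F : finFieldType.

Definition is_line (L : 'M[F]_4) : bool := (\rank L == 2)%N && (<<L>>%MS == L).

Definition on_sub (p : 'rV[F]_4) (L : 'M[F]_4) : bool := (p != 0) && (p <= L)%MS.

Definition meets (A B : 'M[F]_4) : bool := ((A :&: B)%MS != 0).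

Definition skew (A B : 'M[F]_4) : bool := ~~ meets A B.

Definition is_spread (S : {set 'M[F]_4}) : Prop :=
  [/\ forall L, L \in S -> is_line L,
      #|S| = (#|F| ^ 2 + 1)%N,
      forall L M, L \in S -> M \in S -> L != M -> skew L M &
      forall p : 'rV[F]_4, p != 0 -> exists2 L, L \in S & (p <= L)%MS].

Definition transversal (l1 l2 l3 t : 'M[F]_4) : bool :=
  [&& is_line t, meets t l1, meets t l2 & meets t l3].

Definition regulus (l1 l2 l3 : 'M[F]_4) : {set 'M[F]_4} :=
  [set l | is_line l && [forall t, transversal l1 l2 l3 t ==> meets t l]].

Definition regular_spread (S : {set 'M[F]_4}) : Prop :=
  is_spread S /\
  forall l1 l2 l3, l1 \in S -> l2 \in S -> l3 \in S ->
    l1 != l2 -> l1 != l3 -> l2 != l3 -> regulus l1 l2 l3 \subset S.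

Definition repair31 (a b c l : 'M[F]_4) : Prop :=
  exists p1 p2 p3 : 'rV[F]_4,
    [/\ on_sub p1 a, on_sub p2 b, on_sub p3 c & (l <= p1 + p2 + p3)%MS].

End PG3.

(* Main.v *)
Require Import Defs.
From HB Require Import structures.
From mathcomp Require Import all_boot all_order all_algebra all_fingroup.
From mathcomp Require Import zify.
Set Implicit Arguments. Unset Strict Implicit. Unset Printing Implicit Defensive.
Local Open Scope ring_scope.

Section Aux.
Variable F : finFieldType.
Local Notation M := 'M[F]_4.
Local Notation V := 'rV[F]_4.

Lemma meetsP (A B : M) :
  reflect (exists2 v : V, v != 0 & (v <= A)%MS && (v <= B)%MS) (meets A B).
Proof.
rewrite /meets; apply: (iffP rowV0Pn) => [[v vAB nz]|[v nz vAB]].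
  by exists v; rewrite // -sub_capmx.
by exists v; rewrite // sub_capmx.
Qed.

Lemma meets_rank (A B : M) : (\rank (A + B) < \rank A + \rank B)%N -> meets A B.
Proof.
move=> H; rewrite /meets -mxrank_eq0; have := mxrank_sum_cap A B; lia.
Qed.

Lemma skew_rank (a b : M) m1 m2 (A : 'M[F]_(m1,4)) (B : 'M[F]_(m2,4)) :
  Defs.skew a b -> (A <= a)%MS -> (B <= b)%MS -> \rank (A + B) = (\rank A + \rank B)%N.
Proof.
rewrite /Defs.skew /meets negbK => /eqP ab sA sB.
have : (A :&: B <= a :&: b)%MS by apply: capmxS.
rewrite ab submx0 => /eqP e.
have := mxrank_sum_cap A B; rewrite e mxrank0; lia.
Qed.

Lemma sub_rank m1 m2 (A : 'M[F]_(m1,4)) (B : 'M[F]_(m2,4)) :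
  (A <= B)%MS -> (\rank B <= \rank A)%N -> (B <= A)%MS.
Proof.
move=> sAB le; rewrite -(mxrank_leqif_sup sAB).2 eqn_leq le mxrankS //.
Qed.

Lemma meet_plane m (b : M) (pi : 'M[F]_(m,4)) :
  \rank b = 2%N -> \rank pi = 3%N -> exists2 Q : V, Q != 0 & (Q <= b)%MS && (Q <= pi)%MS.
Proof.
move=> rb rp.
have : (b :&: pi != 0)%MS.
  rewrite -mxrank_eq0; have := mxrank_sum_cap b pi; have := rank_leq_col (b + pi)%MS.
  lia.
by case/rowV0Pn => Q; rewrite sub_capmx => H nz; exists Q.
Qed.

Lemma rV1 (P : V) : P != 0 -> \rank P = 1%N.
Proof. by move=> nz; rewrite rank_rV nz. Qed.


Lemma line_through (x y t : M) (P Y : V) : Defs.skew x y -> \rank t = 2%N ->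
  P != 0 -> Y != 0 -> (P <= x)%MS -> (Y <= y)%MS -> (P <= t)%MS -> (Y <= t)%MS ->
  (t <= P + Y)%MS.
Proof.
move=> sk rt nP nY Px Yy Pt Yt.
apply: sub_rank; first by rewrite addsmx_sub Pt Yt.
by rewrite (skew_rank sk Px Yy) !rV1 // rt.
Qed.

Lemma unique_trans (x y z t t' : M) (P : V) :
  \rank y = 2%N -> \rank z = 2%N -> \rank t = 2%N -> \rank t' = 2%N ->
  Defs.skew x y -> Defs.skew x z -> Defs.skew y z ->
  P != 0 -> (P <= x)%MS -> (P <= t)%MS -> (P <= t')%MS ->
  meets t y -> meets t z -> meets t' y -> meets t' z -> (t' <= t)%MS.
Proof.
move=> ry rz rt rt' sxy sxz syz nP Px Pt Pt'.
move=> /meetsP[Y nY /andP[Yt Yy]] /meetsP[Z nZ /andP[Zt Zz]].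
move=> /meetsP[Y' nY' /andP[Yt' Yy']] /meetsP[Z' nZ' /andP[Zt' Zz']].
have tPY := line_through sxy rt nP nY Px Yy Pt Yt.
have tPZ := line_through sxz rt nP nZ Px Zz Pt Zt.
have tPY' := line_through sxy rt' nP nY' Px Yy' Pt' Yt'.
have tPZ' := line_through sxz rt' nP nZ' Px Zz' Pt' Zt'.
set K := (z :&: (P + y))%MS.
have rK : \rank K = 1%N.
  have r1 : \rank (P + y)%MS = 3%N by rewrite (skew_rank sxy Px (submx_refl y)) rV1 // ry.
  have r2 : \rank (z + (P + y))%MS = 4%N.
    apply/eqP; rewrite eqn_leq rank_leq_col /=.
    apply: (@leq_trans (\rank (y + z)%MS)).
      by rewrite (skew_rank syz (submx_refl y) (submx_refl z)) ry rz.
    apply: mxrankS; rewrite addsmx_sub addsmxSl andbT.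
    apply: submx_trans (addsmxSr _ _); exact: addsmxSr.
  have := mxrank_sum_cap z (P + y)%MS; rewrite r1 r2 rz => e.
  by apply/eqP; rewrite -(eqn_add2l 4) e.
have PyS : forall W : V, (W <= P + Y)%MS -> (W <= P + y)%MS.
  by move=> W HW; exact: (submx_trans HW (addsmxS (submx_refl P) Yy)).
have PyS' : forall W : V, (W <= P + Y')%MS -> (W <= P + y)%MS.
  by move=> W HW; exact: (submx_trans HW (addsmxS (submx_refl P) Yy')).
have ZK : (Z <= K)%MS by rewrite sub_capmx Zz PyS // (submx_trans Zt tPY).
have Z'K : (Z' <= K)%MS by rewrite sub_capmx Zz' PyS' // (submx_trans Zt' tPY').
have KZ : (K <= Z)%MS by apply: sub_rank ZK _; rewrite rK rV1.
apply: (submx_trans tPZ'); rewrite addsmx_sub Pt /=.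
exact: submx_trans Z'K (submx_trans KZ Zt).
Qed.


Lemma line_rank (L : M) : is_line L -> \rank L = 2%N.
Proof. by case/andP => /eqP. Qed.

Lemma repair_of (a b c d t : M) :
  \rank b = 2%N -> \rank c = 2%N -> \rank d = 2%N -> is_line t ->
  Defs.skew d a -> Defs.skew a b -> Defs.skew a c -> Defs.skew b c ->
  meets t a -> meets t b -> meets t c -> ~~ meets t d -> repair31 a b c d.
Proof.
move=> rb rc rd /line_rank rt sda sab sac sbc mta mtb mtc nmtd.
case/meetsP: mta => P nP /andP[Pt Pa].
set pi := (d + P)%MS.
have rpi : \rank pi = 3%N by rewrite (skew_rank sda (submx_refl d) Pa) rd rV1.
have [Q nQ /andP[Qb Qpi]] := meet_plane rb rpi.
have [R nR /andP[Rc Rpi]] := meet_plane rc rpi.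
set m := (P + Q + R)%MS.
have mpi : (m <= pi)%MS by rewrite !addsmx_sub Qpi Rpi addsmxSr.
have rPQ : \rank (P + Q)%MS = 2%N by rewrite (skew_rank sab Pa Qb) !rV1.
have PQm : (P + Q <= m)%MS := addsmxSl _ _.
have rm2 : (2 <= \rank m)%N by have := mxrankS PQm; rewrite rPQ.
have [le2|gt2] := leqP (\rank m) 2.
  have rm : \rank m = 2%N by apply/eqP; rewrite eqn_leq le2 rm2.
  have Pm : (P <= m)%MS := submx_trans (addsmxSl P Q) PQm.
  have Qm : (Q <= m)%MS := submx_trans (addsmxSr P Q) PQm.
  have Rm : (R <= m)%MS := addsmxSr _ _.
  have mmb : meets m b by apply/meetsP; exists Q; rewrite // Qm.
  have mmc : meets m c by apply/meetsP; exists R; rewrite // Rm.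
  have tm := unique_trans rb rc rm rt sab sac sbc nP Pa Pm Pt mmb mmc mtb mtc.
  case/negP: nmtd; apply: meets_rank; rewrite rt rd.
  apply: (@leq_ltn_trans (\rank pi)); last by rewrite rpi.
  apply: mxrankS; rewrite addsmx_sub (submx_trans tm mpi) /=.
  exact: addsmxSl.
have pim : (pi <= m)%MS by apply: sub_rank mpi _; rewrite rpi.
exists P, Q, R; split; rewrite /on_sub ?nP ?Pa ?nQ ?Qb ?nR ?Rc //.
exact: submx_trans (addsmxSl d P) pim.
Qed.

Lemma exists_trans (b c e : M) (P : V) :
  \rank c = 2%N -> \rank e = 2%N -> Defs.skew b c -> Defs.skew b e ->
  P != 0 -> (P <= b)%MS ->
  exists2 t : M, (P <= t)%MS & [&& is_line t, meets t b, meets t c & meets t e].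
Proof.
move=> rc re sbc sbe nP Pb.
set pl := (P + c)%MS.
have rpl : \rank pl = 3%N by rewrite (skew_rank sbc Pb (submx_refl c)) rc rV1.
have [Z nZ /andP[Ze Zpl]] := meet_plane re rpl.
set t0 := (P + Z)%MS.
have rt0 : \rank t0 = 2%N by rewrite (skew_rank sbe Pb Ze) !rV1.
have Pt0 : (P <= t0)%MS := addsmxSl _ _.
have Zt0 : (Z <= t0)%MS := addsmxSr _ _.
have mt0c : meets t0 c.
  apply: meets_rank; rewrite rt0 rc.
  apply: (@leq_ltn_trans (\rank pl)); last by rewrite rpl.
  by apply: mxrankS; rewrite !addsmx_sub addsmxSl Zpl addsmxSr.
exists <<t0>>%MS; first by rewrite genmxE.
rewrite /is_line genmx_id eqxx andbT genmxE rt0 /=.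
apply/and3P; split.
- by apply/meetsP; exists P; rewrite // genmxE Pt0 Pb.
- by case/meetsP: mt0c => v nv /andP[vt vc]; apply/meetsP; exists v; rewrite // genmxE vt.
- by apply/meetsP; exists Z; rewrite // genmxE Zt0 Ze.
Qed.

Definition mt (d a b c : M) := forall t, is_line t -> meets t a -> meets t b -> meets t c -> meets t d.

Lemma swap_mt (x y z w : M) :
  \rank x = 2%N -> \rank z = 2%N -> \rank w = 2%N ->
  Defs.skew y z -> Defs.skew y w -> Defs.skew y x -> Defs.skew x z ->
  mt x y z w -> mt w x y z.
Proof.
move=> rx rz rw syz syw syx sxz H t lt mx my mz.
case/meetsP: my => P nP /andP[Pt Py].
have [t' Pt' /and4P[lt' mt'y mt'z mt'w]] := exists_trans rz rw syz syw nP Py.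
have mt'x := H t' lt' mt'y mt'z mt'w.
have tt' := unique_trans rx rz (line_rank lt) (line_rank lt') syx syz sxz nP Py Pt Pt' mx mz mt'x mt'z.
case/meetsP: mt'w => v nv /andP[vt' vw]; apply/meetsP; exists v => //.
by rewrite (submx_trans vt' tt') vw.
Qed.


Lemma final (a b c d : M) :
  \rank b = 2%N -> \rank c = 2%N -> \rank d = 2%N ->
  Defs.skew d a -> Defs.skew a b -> Defs.skew a c -> Defs.skew b c ->
  ~ mt d a b c -> repair31 a b c d.
Proof.
move=> rb rc rd sda sab sac sbc Hmt.
case: (boolP [exists t : M, [&& is_line t, meets t a, meets t b, meets t c & ~~ meets t d]]).
  case/existsP => t /and5P[lt ma mb mc nmd]; exact: (repair_of rb rc rd lt sda sab sac sbc).
move=> /existsPn Hn; case: Hmt => t lt ma mb mc.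
by have := Hn t; rewrite lt ma mb mc /= negbK.
Qed.

End Aux.

Theorem mainTheorem3 (F : finFieldType) (S : {set 'M[F]_4})
    (l1 l2 l3 l4 : 'M[F]_4) :
  regular_spread S ->
  l1 \in S -> l2 \in S -> l3 \in S ->
  l1 != l2 -> l1 != l3 -> l2 != l3 ->
  l4 \in S -> l4 \notin regulus l1 l2 l3 ->
  forall s : 'S_4,
    let l := tnth [tuple l1; l2; l3; l4] in
    repair31 (l (s 0)) (l (s 1)) (l (s 2)) (l (s 3)).
Proof.
move=> [[lineS _ skewS _] _] h1 h2 h3 n12 n13 n23 h4 nreg s l.
have L1 := lineS _ h1; have L2 := lineS _ h2; have L3 := lineS _ h3; have L4 := lineS _ h4.
have r1 := line_rank L1; have r2 := line_rank L2; have r3 := line_rank L3; have r4 := line_rank L4.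
have inreg : forall x, is_line x -> (forall t, is_line t -> meets t l1 -> meets t l2 -> meets t l3 -> meets t x) -> x \in regulus l1 l2 l3.
  move=> x Lx Hx; rewrite inE Lx /=; apply/forallP => t; apply/implyP => /and4P[lt a b c].
  exact: Hx.
have n14 : l1 != l4 by apply: contraNneq nreg => <-; apply: inreg.
have n24 : l2 != l4 by apply: contraNneq nreg => <-; apply: inreg.
have n34 : l3 != l4 by apply: contraNneq nreg => <-; apply: inreg.
have s12 := skewS _ _ h1 h2 n12; have s21 := skewS _ _ h2 h1 (ltac:(by rewrite eq_sym)).
have s13 := skewS _ _ h1 h3 n13; have s31 := skewS _ _ h3 h1 (ltac:(by rewrite eq_sym)).
have s14 := skewS _ _ h1 h4 n14; have s41 := skewS _ _ h4 h1 (ltac:(by rewrite eq_sym)).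
have s23 := skewS _ _ h2 h3 n23; have s32 := skewS _ _ h3 h2 (ltac:(by rewrite eq_sym)).
have s24 := skewS _ _ h2 h4 n24; have s42 := skewS _ _ h4 h2 (ltac:(by rewrite eq_sym)).
have s34 := skewS _ _ h3 h4 n34; have s43 := skewS _ _ h4 h3 (ltac:(by rewrite eq_sym)).
have H4 : ~ mt l4 l1 l2 l3.
  by move=> M; case/negP: nreg; apply: inreg.
have H1 : ~ mt l1 l2 l3 l4 := fun M => H4 (swap_mt r1 r3 r4 s23 s24 s21 s13 M).
have H2 : ~ mt l2 l1 l3 l4.
  move=> M; have X := swap_mt r2 r3 r4 s13 s14 s12 s23 M.
  by apply: H4 => t lt a b c; apply: X.
have H3 : ~ mt l3 l1 l2 l4.
  move=> M; have X := swap_mt r3 r2 r4 s12 s14 s13 s32 M.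
  by apply: H4 => t lt a b c; apply: X.
clear lineS skewS nreg inreg L1 L2 L3 L4 h1 h2 h3 h4.
have d01 : (s 0 : nat) != s 1 by rewrite (inj_eq val_inj) (inj_eq perm_inj).
have d02 : (s 0 : nat) != s 2 by rewrite (inj_eq val_inj) (inj_eq perm_inj).
have d03 : (s 0 : nat) != s 3 by rewrite (inj_eq val_inj) (inj_eq perm_inj).
have d12 : (s 1 : nat) != s 2 by rewrite (inj_eq val_inj) (inj_eq perm_inj).
have d13 : (s 1 : nat) != s 3 by rewrite (inj_eq val_inj) (inj_eq perm_inj).
have d23 : (s 2 : nat) != s 3 by rewrite (inj_eq val_inj) (inj_eq perm_inj).
rewrite /l; move: d01 d02 d03 d12 d13 d23.
case: (s 0) => [[|[|[|[|//]]]] ?]; case: (s 1) => [[|[|[|[|//]]]] ?];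
case: (s 2) => [[|[|[|[|//]]]] ?]; case: (s 3) => [[|[|[|[|//]]]] ?] //= _ _ _ _ _ _;
rewrite /tnth /=; apply: final => //;
first [ (move=> M; apply: H1 => t lt a b c; by apply: M)
      | (move=> M; apply: H2 => t lt a b c; by apply: M)
      | (move=> M; apply: H3 => t lt a b c; by apply: M)
      | (move=> M; apply: H4 => t lt a b c; by apply: M) ].
Qed.
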